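(* Let $n_1\ge1$, $n_2\ge1$ with $n_1+n_2\ge3$. Let $\mathcal L$ be the real Lie algebra generated by all block diagonal matrices $\begin{pmatrix}A&0\\0&B\end{pmatrix}$ with $A\in su(n_1)$, $B\in su(n_2)$ arbitrary, together with a single matrix which has entries $i$ in positions $(j,m)$ and $(m,j)$ and zeros elsewhere, for some fixed $1\le j\le n_1$ and $n_1+1\le m\le n_1+n_2$. Then $\mathcal L=su(n_1+n_2)$. *)

(* Defs.v *)
From HB Require Import structures.
From mathcomp Require Import all_boot all_order all_algebra.
From mathcomp Require Import complex.
Set Implicit Arguments. Unset Strict Implicit. Unset Printing Implicit Defensive.
Import Order.TTheory GRing.Theory Num.Theory.
Local Open Scope ring_scope.
Local Open Scope complex_scope.

Definition adjmx (R : rcfType) (n : nat) (A : 'M[R[i]]_n) : 'M[R[i]]_n :=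
  map_mx (fun z => z^*) A^T.

Definition su (R : rcfType) (n : nat) : 'M[R[i]]_n -> Prop :=
  fun A => adjmx A = - A /\ \tr A = 0.

Definition real_lie_subalg (R : rcfType) (n : nat) (S : 'M[R[i]]_n -> Prop) : Prop :=
  [/\ S 0,
      (forall A B, S A -> S B -> S (A + B)),
      (forall (r : R) A, S A -> S (r%:C *: A)) &
      (forall A B, S A -> S B -> S (A *m B - B *m A))].

Definition lie_gen (R : rcfType) (n : nat) (G : 'M[R[i]]_n -> Prop) : 'M[R[i]]_n -> Prop :=
  fun A => forall S, real_lie_subalg S -> (forall X, G X -> S X) -> S A.

Definition gens6p1 (R : rcfType) (n1 n2 : nat) (j m : 'I_(n1 + n2))
  : 'M[R[i]]_(n1 + n2) -> Prop :=
  fun X => (exists (A : 'M[R[i]]_n1) (B : 'M[R[i]]_n2),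
              [/\ su A, su B & X = block_mx A 0 0 B])
           \/ X = \matrix_(p, q) (if ((p == j) && (q == m)) || ((p == m) && (q == j))
                                  then 'i else 0).

(* Main.v *)
Require Import Defs.
From HB Require Import structures.
From mathcomp Require Import all_boot all_order all_algebra.
From mathcomp Require Import complex.
From mathcomp Require Import ring lra zify.
Import Order.TTheory GRing.Theory Num.Theory.
Local Open Scope ring_scope.

Section Aux.
Variable R : rcfType.
Local Open Scope complex_scope.

Lemma conj_i : conjc ('i : R[i]) = - 'i.
Proof. by apply/eqP; rewrite eq_complex /= oppr0 !eqxx. Qed.

Lemma conjcD (x y : R[i]) : conjc (x + y) = conjc x + conjc y. Proof. exact: rmorphD. Qed.
Lemma conjcM (x y : R[i]) : conjc (x * y) = conjc x * conjc y. Proof. exact: rmorphM. Qed.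
Lemma conjcN (x : R[i]) : conjc (- x) = - conjc x. Proof. exact: rmorphN. Qed.
Lemma conjcB (x y : R[i]) : conjc (x - y) = conjc x - conjc y. Proof. exact: rmorphB. Qed.
Lemma conjc_0 : conjc (0 : R[i]) = 0. Proof. exact: rmorph0. Qed.
Lemma conjc_n (k : nat) : conjc (k%:R : R[i]) = k%:R. Proof. exact: rmorph_nat. Qed.

Lemma adjmxE n (A : 'M[R[i]]_n) p q : adjmx A p q = conjc (A q p).
Proof. by rewrite /adjmx !mxE. Qed.

Lemma skewP n (A : 'M[R[i]]_n) : adjmx A = - A <-> forall p q, conjc (A q p) = - A p q.
Proof.
split=> [h p q|h]; first by rewrite -adjmxE h mxE.
by apply/matrixP=> p q; rewrite adjmxE h mxE.
Qed.

Lemma adjmxM n (A B : 'M[R[i]]_n) : adjmx (A *m B) = adjmx B *m adjmx A.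
Proof. by rewrite /adjmx trmx_mul map_mxM. Qed.

Lemma adjmxB n (A B : 'M[R[i]]_n) : adjmx (A - B) = adjmx A - adjmx B.
Proof. by apply/matrixP=> p q; rewrite !mxE conjcB. Qed.

Lemma su_lie n : real_lie_subalg (@su R n).
Proof.
split.
- split; last by rewrite mxtrace0.
  by apply/skewP=> p q; rewrite !mxE conjc_0 oppr0.
- move=> A B [/skewP hA tA] [/skewP hB tB]; split; last by rewrite mxtraceD tA tB addr0.
  by apply/skewP=> p q; rewrite !mxE conjcD hA hB opprD.
- move=> r A [/skewP hA tA]; split; last by rewrite mxtraceZ tA mulr0.
  by apply/skewP=> p q; rewrite !mxE conjcM conjc_real hA mulrN.
- move=> A B [hA tA] [hB tB]; split; last by rewrite linearB /= mxtrace_mulC subrr.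
  rewrite adjmxB !adjmxM hA hB.
  by rewrite !mulNmx !mulmxN !opprK opprB.
Qed.

End Aux.

Section Main.
Variables (R : rcfType) (n1 n2 : nat) (j m : 'I_(n1 + n2)).
Hypothesis jn1 : (j < n1)%N.
Hypothesis mn1 : (n1 <= m)%N.
Local Open Scope complex_scope.
Local Notation N := (n1 + n2)%N.
Local Notation MT := 'M[R[i]]_(n1 + n2).
Local Notation L := (lie_gen (gens6p1 (R := R) j m)).

Definition comm (A B : MT) := A *m B - B *m A.
Definition Xm (a b : 'I_N) : MT := delta_mx a b - delta_mx b a.
Definition Ym (a b : 'I_N) : MT := 'i *: (delta_mx a b + delta_mx b a).

Lemma L_lie : real_lie_subalg L.
Proof.
split.
- by move=> S [] *.
- by move=> A B hA hB S HS HG; case: (HS) => _ h _ _; apply: h; [apply: hA|apply: hB].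
- by move=> r A hA S HS HG; case: (HS) => _ _ h _; apply: h; apply: hA.
- by move=> A B hA hB S HS HG; case: (HS) => _ _ _ h; apply: h; [apply: hA|apply: hB].
Qed.

Lemma L_gen X : gens6p1 j m X -> L X.
Proof. by move=> g S _ HG; apply: HG. Qed.

Lemma L0 : L 0. Proof. by case: L_lie. Qed.
Lemma LD A B : L A -> L B -> L (A + B). Proof. by case: L_lie => _ h _ _; apply: h. Qed.
Lemma LZ (r : R) A : L A -> L (r%:C *: A). Proof. by case: L_lie => _ _ h _; apply: h. Qed.
Lemma Lcomm A B : L A -> L B -> L (comm A B). Proof. by case: L_lie => _ _ _ h; apply: h. Qed.
Lemma LN A : L A -> L (- A).
Proof.
move=> hA; have -> : - A = (-1 : R)%:C *: A.
  by rewrite (rmorphN (real_complex R)) rmorph1 scaleN1r.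
exact: LZ.
Qed.

Lemma L_sum (I : Type) (r : seq I) (P : pred I) (F : I -> MT) :
  (forall i, P i -> L (F i)) -> L (\sum_(i <- r | P i) F i).
Proof. by move=> h; apply: big_ind => //; [exact: L0|exact: LD]. Qed.


Ltac neqs := repeat match goal with
  | H : is_true (?a != ?b) |- _ =>
     let h1 := fresh "h" in let h2 := fresh "h" in
     have h1 : (a == b) = false := negbTE H;
     have h2 : (b == a) = false := (etrans (eq_sym b a) (negbTE H));
     clear H; rewrite ?h1 ?h2
  end.

Ltac simx := rewrite ?(mulr0n, mulr1n, subr0, sub0r, add0r, addr0, opprK, oppr0, opprB, opprD, eqxx).

Lemma comm_XX (a b c : 'I_N) : a != b -> b != c -> a != c ->
  comm (Xm a b) (Xm b c) = Xm a c.
Proof.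
move=> ab bc ac.
by rewrite /comm /Xm !mulmxBl !mulmxBr !mul_delta_mx_cond !eqxx; neqs; simx.
Qed.

Lemma comm_YX (a b c : 'I_N) : a != b -> b != c -> a != c ->
  comm (Ym a b) (Xm b c) = Ym a c.
Proof.
move=> ab bc ac.
rewrite /comm /Ym /Xm -scalemxAl -scalemxAr -scalerBr; congr (_ *: _).
rewrite ?(mulmxBr, mulmxDl, mulmxBl, mulmxDr, mulNmx, mulmxN) !mul_delta_mx_cond !eqxx; neqs; simx.
done.
Qed.

Lemma comm_YY (a b c : 'I_N) : a != b -> b != c -> a != c ->
  comm (Ym a b) (Ym b c) = - Xm a c.
Proof.
move=> ab bc ac.
rewrite /comm /Ym /Xm -!scalemxAl -!scalemxAr !scalerA -scalerBr.
rewrite -expr2 sqr_i scaleN1r; congr (- _).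
rewrite ?(mulmxBr, mulmxDl, mulmxBl, mulmxDr, mulNmx, mulmxN) !mul_delta_mx_cond !eqxx; neqs; simx.
done.
Qed.

Lemma comm_XY (a b : 'I_N) : a != b ->
  comm (Xm a b) (Ym a b) = 'i *: (delta_mx a a - delta_mx b b) + 'i *: (delta_mx a a - delta_mx b b).
Proof.
move=> ab.
rewrite /comm /Ym /Xm -scalemxAl -scalemxAr -scalerBr -scalerDr; congr (_ *: _).
rewrite ?(mulmxBr, mulmxDl, mulmxBl, mulmxDr, mulNmx, mulmxN) !mul_delta_mx_cond !eqxx; neqs; simx.
done.
Qed.

Lemma sum_blk1 (F : 'I_N -> R[i]) :
  \sum_(p : 'I_N | (p < n1)%N) F p = \sum_(i < n1) F (lshift n2 i).
Proof.
rewrite big_split_ord /= [X in _ + X]big_pred0 ?addr0.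
  by apply: eq_bigl => i; rewrite /= ltn_ord.
by move=> i /=; rewrite ltnNge leq_addr.
Qed.

Lemma sum_blk2 (F : 'I_N -> R[i]) :
  \sum_(p : 'I_N | ~~ (p < n1)%N) F p = \sum_(i < n2) F (rshift n1 i).
Proof.
rewrite big_split_ord /= big_pred0 ?add0r.
  by apply: eq_bigl => i; rewrite /= ltnNge leq_addr.
by move=> i /=; rewrite ltn_ord.
Qed.

Lemma gen_local (X : MT) : (forall p q, conjc (X q p) = - X p q) ->
  (forall p q : 'I_N, (p < n1)%N != (q < n1)%N -> X p q = 0) ->
  \sum_(p : 'I_N | (p < n1)%N) X p p = 0 -> \sum_(p : 'I_N | ~~ (p < n1)%N) X p p = 0 ->
  gens6p1 j m X.
Proof.
move=> sk cz s1 s2; left; exists (ulsubmx X), (drsubmx X); split.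
- split; first by apply/skewP => p q; rewrite !mxE; exact: sk.
  by rewrite /mxtrace; apply: etrans _ s1; rewrite sum_blk1; apply: eq_bigr => i _; rewrite !mxE.
- split; first by apply/skewP => p q; rewrite !mxE; exact: sk.
  by rewrite /mxtrace; apply: etrans _ s2; rewrite sum_blk2; apply: eq_bigr => i _; rewrite !mxE.
- rewrite -[X in X = _]submxK; congr block_mx; apply/matrixP => p q; rewrite !mxE cz //=.
  + by rewrite ltn_ord ltnNge leq_addr.
  + by rewrite ltn_ord ltnNge leq_addr.
Qed.

Lemma dz (a b p q : 'I_N) : (p < n1)%N != (q < n1)%N -> (a < n1)%N = (b < n1)%N ->
  ((p == a) && (q == b)) = false.
Proof. by move=> hpq hab; apply/andP => -[/eqP e1 /eqP e2]; subst; rewrite hab eqxx in hpq. Qed.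

Lemma dd (a b p : 'I_N) : a != b -> ((p == a) && (p == b)) = false.
Proof. by move=> ab; apply/andP => -[/eqP e1 /eqP e2]; subst; rewrite eqxx in ab. Qed.

Lemma Xm_local (a b : 'I_N) : a != b -> (a < n1)%N = (b < n1)%N -> L (Xm a b).
Proof.
move=> ab hab; apply: L_gen; apply: gen_local.
- move=> p q; rewrite !mxE conjcB !conjc_n opprB.
  by rewrite (andbC (q == a)) (andbC (q == b)).
- by move=> p q hpq; rewrite !mxE ?(dz _ _ _ _ hpq hab) ?(dz _ _ _ _ hpq (esym hab)) subrr.
- by rewrite big1 // => p _; rewrite !mxE !dd ?subrr // eq_sym.
- by rewrite big1 // => p _; rewrite !mxE !dd ?subrr // eq_sym.
Qed.

Lemma Ym_local (a b : 'I_N) : a != b -> (a < n1)%N = (b < n1)%N -> L (Ym a b).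
Proof.
move=> ab hab; apply: L_gen; apply: gen_local.
- move=> p q; rewrite !mxE conjcM conjcD !conjc_n conj_i mulNr.
  by rewrite (andbC (q == a)) (andbC (q == b)) addrC.
- by move=> p q hpq; rewrite !mxE ?(dz _ _ _ _ hpq hab) ?(dz _ _ _ _ hpq (esym hab)) addr0 mulr0.
- by rewrite big1 // => p _; rewrite !mxE !dd ?addr0 ?mulr0 // eq_sym.
- by rewrite big1 // => p _; rewrite !mxE !dd ?addr0 ?mulr0 // eq_sym.
Qed.

Lemma Ym_gen : j != m -> L (Ym j m).
Proof.
move=> jm; apply: L_gen; right; apply/matrixP => p q; rewrite !mxE.
case E1: ((p == j) && (q == m)); case E2: ((p == m) && (q == j)) => /=;
  rewrite ?addr0 ?add0r ?mulr1 ?mulr0 //.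
move/andP: E1 => [/eqP e1 _]; move/andP: E2 => [/eqP e2 _].
by move: jm; rewrite -e1 e2 eqxx.
Qed.

Lemma Xsym (a b : 'I_N) : Xm b a = - Xm a b. Proof. by rewrite /Xm opprB. Qed.
Lemma Ysym (a b : 'I_N) : Ym b a = Ym a b. Proof. by rewrite /Ym addrC. Qed.

Lemma jm_neq : j != m.
Proof. by apply/eqP => e; move: jn1; rewrite e ltnNge mn1. Qed.

Lemma cross_neq (p q : 'I_N) : (p < n1)%N -> ~~ (q < n1)%N -> p != q.
Proof. by move=> hp hq; apply/eqP => e; move: hq; rewrite -e hp. Qed.

Lemma ord_neq (x y : 'I_N) : val x != val y -> x != y.
Proof. by apply: contra => /eqP ->. Qed.

Lemma exists_k : (3 <= N)%N -> exists2 k : 'I_N, k != j & k != m.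
Proof.
move=> h3.
have h0 : (0 < N)%N by lia.
have h1 : (1 < N)%N by lia.
have h2 : (2 < N)%N by lia.
have jm : nat_of_ord j != nat_of_ord m by exact: jm_neq.
case: (boolP ((nat_of_ord j != 0%N) && (nat_of_ord m != 0%N))) => H0.
  by exists (Ordinal h0); apply: ord_neq => /=; lia.
case: (boolP ((nat_of_ord j != 1%N) && (nat_of_ord m != 1%N))) => H1.
  by exists (Ordinal h1); apply: ord_neq => /=; lia.
by exists (Ordinal h2); apply: ord_neq => /=; lia.
Qed.

Lemma Xjm_L : (3 <= N)%N -> L (Xm j m).
Proof.
move=> h3; have jm := jm_neq; have mj : m != j by rewrite eq_sym.
have [k kj km] := exists_k h3.
have jk : j != k by rewrite eq_sym.
have mk : m != k by rewrite eq_sym.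
rewrite -[Xm j m]opprK -(comm_YY j k m) //; apply: LN; apply: Lcomm.
- case: (boolP (k < n1)%N) => hk.
    by apply: Ym_local => //; rewrite jn1 hk.
  rewrite -(comm_YX j m k) //; apply: Lcomm; first exact: Ym_gen.
  by apply: Xm_local => //; rewrite (negbTE hk) ltnNge mn1.
- case: (boolP (k < n1)%N) => hk.
    rewrite (Ysym m k) -(comm_YX m j k) //; apply: Lcomm; first by rewrite (Ysym j m); exact: Ym_gen.
    by apply: Xm_local => //; rewrite jn1 hk.
  by apply: Ym_local => //; rewrite (negbTE hk) ltnNge mn1.
Qed.

Lemma cross_L (p q : 'I_N) : (3 <= N)%N -> (p < n1)%N -> ~~ (q < n1)%N ->
  L (Xm p q) /\ L (Ym p q).
Proof.
move=> h3 hp hq; have jm := jm_neq; have mj : m != j by rewrite eq_sym.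
have hm : ~~ (m < n1)%N by rewrite -leqNgt.
have pm : p != m by exact: cross_neq.
have mp : m != p by rewrite eq_sym.
have [XL YL] : L (Xm p m) /\ L (Ym p m).
  case: (eqVneq p j) => [->|pj]; first by split; [exact: Xjm_L|exact: Ym_gen].
  have jp : j != p by rewrite eq_sym.
  split.
    rewrite -(comm_XX p j m) //; apply: Lcomm; last exact: Xjm_L.
    by apply: Xm_local => //; rewrite hp jn1.
  rewrite (Ysym m p) -(comm_YX m j p) //; apply: Lcomm; first by rewrite (Ysym j m); exact: Ym_gen.
  by apply: Xm_local => //; rewrite hp jn1.
case: (eqVneq q m) => [->|qm]; first by split.
have mq : m != q by rewrite eq_sym.
have pq : p != q by exact: cross_neq.
have XmqL : L (Xm m q) by apply: Xm_local => //; rewrite (negbTE hm) (negbTE hq).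
split.
  by rewrite -(comm_XX p m q) //; apply: Lcomm.
by rewrite -(comm_YX p m q) //; apply: Lcomm.
Qed.

Lemma Dg_L : (3 <= N)%N -> L ('i *: (delta_mx j j - delta_mx m m)).
Proof.
move=> h3.
have := @LZ (2^-1) _ (@Lcomm _ _ (Xjm_L h3) (Ym_gen jm_neq)) .
rewrite comm_XY ?jm_neq // -mulr2n -scaler_nat scalerA.
have e : (2^-1 : R)%:C * 2 = 1 :> R[i].
  by rewrite -(rmorph_nat (real_complex R) 2) -rmorphM mulVf ?rmorph1 // pnatr_eq0.
by rewrite scalerA mulrA e mul1r.
Qed.

Lemma ssum (P : pred 'I_N) (G : 'I_N -> R[i]) s :
  \sum_(q | P q) (if s == q then G q else 0) = if P s then G s else 0.
Proof.
rewrite big_mkcond (bigD1 s) //= eqxx big1 ?addr0 => [|q qs]; first by case: (P s).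
by rewrite eq_sym (negbTE qs); case: (P q).
Qed.

Lemma dsum (P Q : pred 'I_N) (F : 'I_N -> 'I_N -> R[i]) r s :
  \sum_(p | P p) \sum_(q | Q q) F p q * ((r == p) && (s == q))%:R =
  if P r && Q s then F r s else 0.
Proof.
transitivity (\sum_(p | P p) (if r == p then (if Q s then F p s else 0) else 0)).
  apply: eq_bigr => p _; rewrite -(ssum Q (F p) s); case: (r == p); last by rewrite big1 // => q _; rewrite andFb mulr0; case: (s == q).
  apply: eq_bigr => q _.
  by case: (r == p); case: (s == q); rewrite ?mulr1 ?mulr0.
by rewrite ssum; case: (P r).
Qed.

Lemma sum_ind (P : pred 'I_N) (a : 'I_N) :
  \sum_(p | P p) ((p == a)%:R : R[i]) = (P a)%:R.
Proof.
rewrite (eq_bigr (fun p => if a == p then 1 else 0)) ?ssum; first by case: (P a).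
by move=> p _; rewrite eq_sym; case: (a == p).
Qed.

Lemma purely_imag (z : R[i]) : conjc z = - z -> z = (complex.Im z)%:C * 'i%C.
Proof.
case: z => a b /= /eqP; rewrite eq_complex /= => /andP[/eqP ha _].
have a0 : a = 0 by lra.
apply/eqP; rewrite eq_complex /= a0 ?mulr0 ?mul0r ?mulr1 ?subr0 ?addr0 ?oppr0 ?subrr ?eqxx //.
Qed.

Lemma term_eq (a : R[i]) (D1 D2 : MT) :
  a *: D1 + (- conjc a) *: D2 = (complex.Re a)%:C *: (D1 - D2) + (complex.Im a)%:C *: ('i%C *: (D1 + D2)).
Proof.
case: a => x y /=.
have e1 : x +i* y = x%:C + y%:C * 'i%C.
  by apply/eqP; rewrite eq_complex /= ?mulr0 ?mul0r ?mulr1 ?subr0 ?addr0 ?add0r ?oppr0 ?subrr ?eqxx.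
have e2 : x -i* y = x%:C - y%:C * 'i%C.
  by apply/eqP; rewrite eq_complex /= ?mulr0 ?mul0r ?mulr1 ?subr0 ?addr0 ?add0r ?oppr0 ?subrr ?eqxx.
rewrite e1 e2; apply/matrixP => r s; rewrite !mxE; ring.
Qed.

Lemma su_L (A : MT) : (3 <= N)%N -> su A -> L A.
Proof.
move=> h3 [/skewP sk tr].
pose c := \sum_(p : 'I_N | (p < n1)%N) A p p.
pose P : MT := \matrix_(p, q) (if (p < n1)%N == (q < n1)%N then A p q else 0).
pose Dg : MT := delta_mx j j - delta_mx m m.
have cc : conjc c = - c.
  have -> : conjc c = \sum_(p : 'I_N | (p < n1)%N) conjc (A p p) by exact: rmorph_sum.
  by rewrite -sumrN; apply: eq_bigr => p _; exact: sk.
have s2 : \sum_(p : 'I_N | ~~ (p < n1)%N) A p p = - c.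
  move: tr; rewrite /mxtrace (bigID (fun p : 'I_N => (p < n1)%N)) /= => /eqP.
  by rewrite addr_eq0 => /eqP e; rewrite /c e opprK.
have -> : A = (P - c *: Dg) + c *: Dg + (A - P) by rewrite subrK addrC subrK.
apply: LD; first apply: LD.
- apply: L_gen; apply: gen_local.
  + move=> p q; rewrite !mxE conjcB conjcM conjcB !conjc_n cc [(q < n1)%N == _]eq_sym.
    rewrite (andbC (q == j)) (andbC (q == m)).
    case: ifP => _; rewrite ?sk ?conjc_0 mulNr opprK opprB ?subr0 ?add0r //.
    by rewrite [LHS]addrC.
  + by move=> p q hpq; rewrite !mxE (negbTE hpq) !(dz _ _ _ _ hpq) // subrr mulr0 subr0.
  + under eq_bigr => p _ do rewrite !mxE eqxx !andbb.
    by rewrite sumrB -mulr_sumr sumrB !sum_ind /= jn1 ltnNge mn1 /= -/c ?subr0 ?mulr1 ?subrr.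
  + under eq_bigr => p _ do rewrite !mxE eqxx !andbb.
    by rewrite sumrB -mulr_sumr sumrB !sum_ind /= jn1 ltnNge mn1 /= s2 ?sub0r mulrN1 opprK addNr.
- rewrite (purely_imag c cc) -scalerA; apply: LZ; exact: Dg_L.
- have -> : A - P = \sum_(p : 'I_N | (p < n1)%N) \sum_(q : 'I_N | ~~ (q < n1)%N)
      (A p q *: delta_mx p q + A q p *: delta_mx q p).
    apply/matrixP => r s; rewrite !mxE summxE.
    under eq_bigr do rewrite summxE.
    under eq_bigr do under eq_bigr do rewrite !mxE.
    rewrite (eq_bigr (fun p => \sum_(q : 'I_N | ~~ (q < n1)%N) A p q * ((r == p) && (s == q))%:R
                         + \sum_(q : 'I_N | ~~ (q < n1)%N) A q p * ((r == q) && (s == p))%:R)); last first.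
      by move=> p _; rewrite big_split.
    rewrite big_split /= dsum exchange_big /= dsum.
    by case: (r < n1)%N; case: (s < n1)%N => /=; rewrite ?subrr ?subr0 ?addr0 ?add0r.
  apply: L_sum => p hp; apply: L_sum => q hq.
  have -> : A q p = - conjc (A p q) by rewrite sk opprK.
  have [XL YL] := cross_L p q h3 hp hq.
  by rewrite term_eq; apply: LD; apply: LZ.
Qed.

Lemma adjmx_block (A1 : 'M[R[i]]_n1) (B1 : 'M[R[i]]_n2) :
  adjmx (block_mx A1 0 0 B1) = block_mx (adjmx A1) 0 0 (adjmx B1).
Proof.
rewrite /adjmx tr_block_mx map_block_mx !trmx0; congr block_mx;
  by apply/matrixP => p q; rewrite !mxE conjc_0.
Qed.

Lemma gens_su (X : MT) : gens6p1 j m X -> su X.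
Proof.
case=> [[A1 [B1 [[aA tA] [aB tB] ->]]]|->].
  split; first by rewrite adjmx_block aA aB opp_block_mx !oppr0.
  by rewrite mxtrace_block tA tB addr0.
split.
  apply/skewP => p q; rewrite !mxE (andbC (q == j)) (andbC (q == m)) orbC.
  by case: ifP => _; rewrite ?conj_i ?conjc_0 ?oppr0.
rewrite /mxtrace big1 // => p _; rewrite mxE !dd ?jm_neq //.
by rewrite eq_sym jm_neq.
Qed.
End Main.

Theorem lemma6p1 (R : rcfType) (n1 n2 : nat) (j m : 'I_(n1 + n2)) :
  (1 <= n1)%N -> (1 <= n2)%N -> (3 <= n1 + n2)%N ->
  (j < n1)%N -> (n1 <= m)%N ->
  forall A : 'M[R[i]]_(n1 + n2), lie_gen (gens6p1 j m) A <-> su A.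
Proof.
move=> h1 h2 h3 hj hm A; split.
  by move=> hA; apply: hA; [exact: su_lie | move=> X; exact: gens_su].
by move=> sA; apply: su_L.
Qed.
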